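(* Let $N_1,\dots,N_d$ be positive integers, $\Omega=[N_1]\times\cdots\times[N_d]$, $X\subseteq\Omega$, and let $b:\mathbb{N}\to(0,\infty)$ be a function. If $\chi:X\to\{-1,0,1\}$ is a partial coloring of $X$ such that $|\chi(S)|\le b(|S|)$ for all $S\in\mathcal{C}_X$, then \[ |\chi(A)|\le 2\sum_{s:\,s=2^t}b(s) \] for all $A\in\mathcal{A}_X$, where the sum is over all powers of $2$ ($t=0,1,2,\dots$).
   Context: $[N]=\{1,\dots,N\}$. An arithmetic progression in $d$ dimensions is a set $\{\mathbf{a}+i\mathbf{b}: i=0,\dots,l-1\}$ with $\mathbf{a},\mathbf{b}\in\mathbb{Z}^d$, $\mathbf{b}\ne\mathbf{0}$, $l\in\mathbb{N}$; $\mathcal{A}_{\mathbf{N}}$ is the family of such progressions contained in $\Omega$, and $\mathcal{A}_X=\{A\cap X: A\in\mathcal{A}_{\mathbf{N}}\}$. For $\mathbf{b}\in\mathbb{Z}^d\setminus\{\mathbf{0}\}$, points $\mathbf{x},\mathbf{x}'$ are congruent mod $\mathbf{b}$ if $\mathbf{x}-\mathbf{x}'\in\mathbb{Z}\mathbf{b}$. For each $\mathbf{b}\ne\mathbf{0}$ and each congruence class $I$ of $X$ modulo $\mathbf{b}$ (i.e. the set of elements of $X$ congruent to a given point), list $I=\{\mathbf{x}_1,\dots,\mathbf{x}_l\}$ in increasing order of the dot product $\mathbf{x}_u\cdot\mathbf{b}$ (these are distinct). $\mathcal{C}_X$ is the collection, over all such $(\mathbf{b},I)$, of all sets $\{\mathbf{x}_u:(j-1)s+1\le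 u\le js\}$ where $s=2^t$ ($t\ge0$ an integer) and $1\le j\le\lfloor l/s\rfloor$. For $A\subseteq X$, $\chi(A)=\sum_{x\in A}\chi(x)$. *)

(* Defs.v *)
From HB Require Import structures.
From mathcomp Require Import all_boot all_order all_algebra.
From mathcomp Require Import all_classical all_reals all_analysis.
Set Implicit Arguments. Unset Strict Implicit. Unset Printing Implicit Defensive.
Import Order.TTheory GRing.Theory Num.Theory.
Local Open Scope ring_scope.

Definition pt (d : nat) := 'rV[int]_d.

Definition inOmega (d : nat) (N : 'I_d -> nat) (x : pt d) : bool :=
  [forall i, (1 <= x 0 i) && (x 0 i <= (N i)%:Z)].

Definition dot (d : nat) (x y : pt d) : int := \sum_(i < d) x 0 i * y 0 i.

Definition congr_mod (d : nat) (b x x' : pt d) : Prop :=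
  exists k : int, x - x' = k *: b.

Definition in_AP (d : nat) (a b : pt d) (l : nat) (x : pt d) : bool :=
  [exists i : 'I_l, x == a + b *+ i].

(* The congruence class of x0 in X (X given as a duplicate-free list)
   modulo b, listed in increasing order of the dot product with b. *)
Definition cong_class (d : nat) (X : seq (pt d)) (b x0 : pt d) : seq (pt d) :=
  sort (fun x y => dot x b <= dot y b)
       [seq x <- X | `[< congr_mod b x x0 >] ].

(* The block {x_u : (j-1)s+1 <= u <= js} of the listed class I (1-based j). *)
Definition block (d : nat) (I : seq (pt d)) (s j : nat) : seq (pt d) :=
  take s (drop (j.-1 * s) I).

Definition chi_sum (d : nat) (chi : pt d -> int) (S : seq (pt d)) : int :=
  \sum_(x <- S) chi x.

(* Main.v *)
Require Import Defs.
From HB Require Import structures.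
From mathcomp Require Import all_boot all_order all_algebra.
From mathcomp Require Import all_classical all_reals all_analysis.
From mathcomp Require Import zify.
Import Order.TTheory GRing.Theory Num.Theory.
Local Open Scope ring_scope.

Lemma prefix_bound (R : realType) (d : nat) (chi : pt d -> int) (bnd : nat -> R)
  (I : seq (pt d)) :
  (forall n, 0 < bnd n) ->
  (forall t j, (1 <= j <= size I %/ 2 ^ t)%N ->
     `|(chi_sum chi (block I (2 ^ t) j))%:~R| <= bnd (size (block I (2 ^ t) j))) ->
  forall T c q, (q < 2 ^ T)%N -> (c * 2 ^ T + q <= size I)%N ->
  `|(chi_sum chi (take q (drop (c * 2 ^ T) I)))%:~R : R| <= \sum_(t < T) bnd (2 ^ t)%N.
Proof.
move=> Hb HC; elim=> [|T IH] c q Hq Hs.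
  have -> : q = 0%N by lia.
  by rewrite take0 /chi_sum big_nil big_ord0 normr0.
rewrite big_ord_recr /=.
have E : (c * 2 ^ T.+1 = c.*2 * 2 ^ T)%N by rewrite expnS mulnA -muln2 mulnC (mulnC c 2) mulnA.
rewrite E.
have pT : (0 < 2 ^ T)%N by rewrite expn_gt0.
case: (ltnP q (2 ^ T)) => Hq2.
  apply: le_trans (IH _ _ Hq2 _) _; first by rewrite -E.
  by rewrite lerDl ltW.
have -> : q = (2 ^ T + (q - 2 ^ T))%N by lia.
rewrite takeD drop_drop /chi_sum big_cat intrD.
apply: le_trans (ler_normD _ _) _.
rewrite addrC; apply: lerD; last first.
  have -> : (2 ^ T + c.*2 * 2 ^ T = c.*2.+1 * 2 ^ T)%N by rewrite mulSn.
  apply: IH; rewrite expnS in Hq; lia.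
have HH := HC T (c.*2.+1).
rewrite /block /= in HH.
have Hsz : size (take (2 ^ T) (drop (c.*2 * 2 ^ T) I)) = (2 ^ T)%N.
  rewrite size_takel // size_drop; rewrite E in Hs; lia.
rewrite Hsz in HH; apply: HH.
rewrite leq_divRL // mulSn; rewrite E in Hs; lia.
Qed.

Lemma filter_lt_sorted (T : eqType) (f : T -> int) (c : int) (s : seq T) :
  sorted (fun x y => f x <= f y) s ->
  [seq x <- s | f x < c] = take (count (fun x => f x < c) s) s.
Proof.
elim: s => [|x s IH] //= Hp.
have Hs := path_sorted Hp.
case: ifP => Hx; first by rewrite /= IH.
have tr : transitive (fun x y => f x <= f y) by move=> ? ? ? ; apply: le_trans.
have Hall := order_path_min tr Hp.
have H0 : {in s, forall y, (f y < c) = false}.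
  move=> y /(allP Hall) /= Hy; apply/negbTE; rewrite -leNgt.
  by apply: le_trans Hy; rewrite leNgt Hx.
rewrite (eq_in_filter (a2 := pred0)) ?filter_pred0 //.
by rewrite (eq_in_count (a2 := pred0)) ?count_pred0.
Qed.

Lemma dot_lin d (a b : pt d) (m : int) : dot (a + m *: b) b = dot a b + m * dot b b.
Proof.
rewrite /dot mulr_sumr -big_split; apply: eq_bigr => i _.
by rewrite !mxE mulrDl mulrA.
Qed.

Lemma dot_pos d (b : pt d) : b != 0 -> 0 < dot b b.
Proof.
move=> b0.
have [i bi] : exists i, b 0 i != 0.
  apply/existsP; apply: contraNT b0 => /existsPn H.
  apply/eqP/rowP => i; rewrite !mxE; apply/eqP; exact: negbNE (H i).
rewrite /dot (bigD1 i) //=.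
apply: (@lt_le_trans _ _ (b 0 i * b 0 i)).
  by rewrite lt_def mulf_neq0 // -expr2 sqr_ge0.
rewrite lerDl; apply: sumr_ge0 => j _; by rewrite -expr2 sqr_ge0.
Qed.

Lemma inAP_m d (a b : pt d) l (m : int) : b != 0 ->
  in_AP a b l (a + m *: b) = (0 <= m) && (m < l%:Z).
Proof.
move=> b0; apply/existsP/andP.
  case=> i /eqP H.
  have H2 : (m - (nat_of_ord i)%:Z) *: b = 0.
    rewrite scalerBl; apply/eqP; rewrite subr_eq0; apply/eqP.
    by rewrite -natz scaler_nat; apply: (addrI a).
  move/eqP: H2; rewrite scalemx_eq0 (negbTE b0) orbF subr_eq0 => /eqP ->.
  by rewrite lez_nat ltz_nat ltn_ord.
case: m => [n|n] [] //= _; rewrite ltz_nat => nl.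
exists (Ordinal nl); apply/eqP => /=.
by rewrite -scaler_nat natz.
Qed.

Lemma sum_split d (chi : pt d -> int) (f : pt d -> int) lo hi (s : seq (pt d)) :
  lo <= hi ->
  chi_sum chi [seq x <- s | ~~ (f x < lo) && (f x < hi)] =
  chi_sum chi [seq x <- s | f x < hi] - chi_sum chi [seq x <- s | f x < lo].
Proof.
move=> lh; rewrite /chi_sum !big_filter [in RHS]big_mkcond [X in _ - X]big_mkcond.
rewrite -sumrB big_mkcond; apply: eq_bigr => x _.
case: (ltP (f x) lo) => H1 /=.
  by rewrite (lt_le_trans H1 lh) subrr.
by case: ifP; rewrite subr0.
Qed.

Theorem lemma2p1 (R : realType) (d : nat) (N : 'I_d -> nat)
    (X : seq (pt d)) (bnd : nat -> R) (chi : pt d -> int) :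
  (forall i, (0 < N i)%N) ->
  uniq X ->
  (forall x, x \in X -> inOmega N x) ->
  (forall n, 0 < bnd n) ->
  (forall x, x \in X -> chi x \in [:: -1; 0; 1]) ->
  (* |chi(S)| <= b(|S|) for every S in C_X *)
  (forall (b x0 : pt d) (t j : nat), b != 0 -> x0 \in X ->
     (1 <= j <= size (cong_class X b x0) %/ 2 ^ t)%N ->
     `|(chi_sum chi (block (cong_class X b x0) (2 ^ t) j))%:~R|
        <= bnd (size (block (cong_class X b x0) (2 ^ t) j))) ->
  (* conclusion for every A in A_X, A = P \cap X with P a progression in Omega *)
  forall (a b : pt d) (l : nat), b != 0 ->
    (forall i : nat, (i < l)%N -> inOmega N (a + b *+ i)) ->
    ((`|(chi_sum chi [seq x <- X | in_AP a b l x])%:~R| : R)%:E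
       <= 2%:E * \sum_(0 <= t <oo) (bnd (2 ^ t)%N)%:E)%E.
Proof.
move=> HN Xu HXO Hb Hchi HC a b l b0 Hom.
have Sge0 : (0 <= \sum_(0 <= t <oo) (bnd (2 ^ t)%N)%:E)%E.
  by apply: nneseries_ge0 => n _ _; rewrite lee_fin ltW.
case E: [seq x <- X | in_AP a b l x] => [|x0 A'].
  by rewrite /chi_sum big_nil mulr0z normr0 mule_ge0.
have : x0 \in [seq x <- X | in_AP a b l x] by rewrite E mem_head.
rewrite mem_filter => /andP [/existsP [i0 /eqP Hx0] x0X].
rewrite -E; clear E A'.
pose f := fun x => dot x b.
pose C := fun x => `[< congr_mod b x x0 >].
have K : forall x, C x -> in_AP a b l x = ~~ (f x < f a) && (f x < f a + l%:Z * dot b b).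
  move=> x /asboolP [k Hk].
  have -> : x = a + (k + (nat_of_ord i0)%:Z) *: b.
    by rewrite scalerDl -natz scaler_nat addrCA -Hx0 -Hk subrK.
  rewrite inAP_m // /f !dot_lin gtrDl ltrD2l ltr_pM2r ?dot_pos //.
  by rewrite pmulr_llt0 ?dot_pos // -leNgt.
have AC : forall x, in_AP a b l x -> C x.
  move=> x /existsP [i /eqP ->]; apply/asboolP.
  exists ((nat_of_ord i)%:Z - (nat_of_ord i0)%:Z).
  by rewrite Hx0 scalerBl -!natz !scaler_nat opprD addrACA subrr add0r.
pose I := cong_class X b x0.
have step1 : chi_sum chi [seq x <- X | in_AP a b l x] = chi_sum chi [seq x <- I | in_AP a b l x].
  have -> : [seq x <- X | in_AP a b l x] = [seq x <- [seq x <- X | C x] | in_AP a b l x].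
    rewrite -filter_predI; apply: eq_filter => x /=.
    by case H: (in_AP a b l x) => //=; rewrite AC.
  rewrite /chi_sum; apply: perm_big; apply: perm_filter.
  by rewrite /I /cong_class perm_sym perm_sort.
have sI : sorted (fun x y => f x <= f y) I.
  by apply: sort_sorted => x y; apply: le_total.
have step2 : [seq x <- I | in_AP a b l x] =
    [seq x <- I | ~~ (f x < f a) && (f x < f a + l%:Z * dot b b)].
  apply: eq_in_filter => x; rewrite /I /cong_class mem_sort mem_filter.
  by move=> /andP [Cx _]; apply: K.
rewrite step1 step2 sum_split; last by rewrite lerDl mulr_ge0 // ltW // dot_pos.
rewrite !(@filter_lt_sorted _ _ _ _ sI).
have PB := @prefix_bound R d chi bnd (cong_class X b x0) Hb (fun t j => HC b x0 t j b0 x0X) (size I) 0%N.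
rewrite mul0n drop0 -/I in PB.
have Bq : forall P : pred (pt d),
   `|(chi_sum chi (take (count P I) I))%:~R : R| <= \sum_(t < size I) bnd (2 ^ t)%N.
  move=> P; apply: PB; last by rewrite add0n count_size.
  exact: leq_ltn_trans (count_size _ _) (ltn_expl _ (isT : (1 < 2)%N)).
set S := \sum_(t < size I) bnd (2 ^ t)%N.
apply: (@le_trans _ _ (2%:E * S%:E)%E).
  rewrite -EFinM lee_fin mulr_natl mulr2n intrD intrN.
  apply: le_trans (ler_normD _ _) _; rewrite normrN; apply: lerD; exact: Bq.
apply: lee_wpmul2l; first by rewrite lee_fin.
rewrite /S -sumEFin.
have H := @nneseries_lim_ge R (fun t => (bnd (2 ^ t)%N)%:E) xpredT 0%N (size I).
rewrite big_mkord in H; apply: H => n _ _; rewrite lee_fin; exact: ltW (Hb _).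
Qed.
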